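(* Let $q\ge1$, $d=2^q$. Let $V_{\{\mathrm A\}}=\mathrm{span}\{A_{\sigma,\tau}:\tau\in\boldsymbol{\sigma}_q,\sigma\in\boldsymbol{N}_\tau\}$, $V_{[\mathrm A]}=\mathrm{span}\{A_{\sigma,\tau}:\tau\in\boldsymbol{\sigma}_q,\sigma\in\boldsymbol{C}_\tau\}$, and $V_{\{\mathrm{adj}\}}=\mathrm{span}\{\frac{1}{\sqrt{2|\boldsymbol{N}_\tau|}}\sum_{\sigma\in\boldsymbol{N}_\tau}A_{\sigma,i\sigma\cdot\tau}:\tau\in\boldsymbol{\sigma}_q\}\subseteq V_{\{\mathrm A\}}$. Let $V^\perp_{\{\mathrm{adj}\}}$ be the orthogonal complement of $V_{\{\mathrm{adj}\}}$ in $V_{\{\mathrm A\}}$ (Hilbert–Schmidt inner product). Then the subrepresentations of $\varphi^{\otimes2}$ carried by $V_{[\mathrm A]}$ and by $V^\perp_{\{\mathrm{adj}\}}$ are equivalent.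
   Context: $\mathcal{M}_d$ is the space of complex $d\times d$ matrices with inner product $\langle A,B\rangle=\mathrm{tr}(A^\dagger B)$ (extended to tensor products). $X,Y,Z$ are the single-qubit Pauli matrices; $\hat{\mathcal{P}}_q$ is the set of $q$-fold tensor products of elements of $\{\mathbb{1},X,Y,Z\}$. $\boldsymbol{\sigma}_q=\{P/\sqrt d:P\in\hat{\mathcal P}_q\setminus\{\mathbb 1\}\}$. The normalized product is $\sigma\cdot\tau=\sqrt d\,\sigma\tau$; for anticommuting $\sigma,\tau\in\boldsymbol\sigma_q$, $i\sigma\cdot\tau$ is $\pm$ an element of $\boldsymbol\sigma_q$. For $\tau\in\boldsymbol{\sigma}_q$: $\boldsymbol{N}_\tau=\{\sigma\in\boldsymbol{\sigma}_q:\sigma\tau+\tau\sigma=0\}$, $\boldsymbol{C}_\tau=\{\sigma\in\boldsymbol{\sigma}_q\setminus\{\tau\}:\sigma\tau=\tau\sigma\}$. $A_{\sigma,\rho}=\frac1{\sqrt2}(\sigma\otimes\rho-\rho\otimes\sigma)$ (bilinear). The Pauli group $\mathcal{P}_q\subset U(2^q)$ consists of all $q$-fold tensor products of elements of the group generated by $X,Z,i\mathbb 1_2$; the Clifford group is $\mathcal{C}_q=\{U\in U(2^q):U\mathcal{P}_qU^\dagger\subseteq\mathcal{P}_q\}/U(1)$. The two-copy representation on $\mathcal{M}_d^{\otimes2}$ is $\varphi^{\otimes2}(C)(A\otimes B)=(CAC^\dagger)\otimes(CBC^\dagger)$, extended linearly; the spaces above are invariant under it. *)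

(* Defs.v *)
From HB Require Import structures.
From mathcomp Require Import all_boot all_order all_algebra.
From mathcomp Require Import complex mxtens.
Set Implicit Arguments. Unset Strict Implicit. Unset Printing Implicit Defensive.
Import Order.TTheory GRing.Theory Num.Theory.
Local Open Scope ring_scope.
Local Open Scope complex_scope.

Section Defs.
Variable R : rcfType.
Local Notation C := R[i].

Definition adj {m n} (A : 'M[C]_(m, n)) : 'M[C]_(n, m) := (map_mx conjc A)^T.

(* single-qubit Paulis: 0 -> 1, 1 -> X, 2 -> Y, 3 -> Z *)
Definition pauli1 (a : 'I_4) : 'M[C]_2 :=
  \matrix_(i < 2, j < 2)
    match nat_of_ord a with
    | 0 => if i == j then 1 else 0
    | 1 => if i == j then 0 else 1
    | 2 => if i == j then 0 else (if val i == 0%N then - 'i else 'i)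
    | _ => if i == j then (if val i == 0%N then 1 else -1) else 0
    end.

Fixpoint pstr (s : seq 'I_4) : 'M[C]_(2 ^ size s) :=
  match s return 'M[C]_(2 ^ size s) with
  | [::] => 1%:M
  | a :: s' => castmx (esym (expnS 2 (size s')), esym (expnS 2 (size s')))
                      (pauli1 a *t pstr s')
  end.

Variable q : nat.
Local Notation d := (2 ^ q)%N.

Definition pauli (s : q.-tuple 'I_4) : 'M[C]_d :=
  castmx (congr1 (expn 2) (size_tuple s), congr1 (expn 2) (size_tuple s)) (pstr s).

Definition nonid (s : q.-tuple 'I_4) : bool := ~~ all (pred1 ord0) s.

Definition nsig (s : q.-tuple 'I_4) : 'M[C]_d := (sqrtC (d%:R : C))^-1 *: pauli s.

(* normalized product sigma . tau = sqrt d sigma tau *)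
Definition ndot (A B : 'M[C]_d) : 'M[C]_d := sqrtC (d%:R : C) *: (A *m B).

Definition Nset (t : q.-tuple 'I_4) : {set q.-tuple 'I_4} :=
  [set s | nonid s & nsig s *m nsig t + nsig t *m nsig s == 0].

Definition Cset (t : q.-tuple 'I_4) : {set q.-tuple 'I_4} :=
  [set s | [&& nonid s, s != t & nsig s *m nsig t == nsig t *m nsig s]].

(* A_{sigma,rho} = (sigma (x) rho - rho (x) sigma)/sqrt 2 in M_d (x) M_d = M_{d*d} *)
Definition Amx (A B : 'M[C]_d) : 'M[C]_(d * d) :=
  (sqrtC (2%:R : C))^-1 *: (A *t B - B *t A).

Definition inspan (I : finType) (P : pred I) (g : I -> 'M[C]_(d * d))
  (X : 'M[C]_(d * d)) : bool :=
  (mxvec X <= \sum_(i | P i) <<mxvec (g i)>>)%MS.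

Definition inVA (X : 'M[C]_(d * d)) : bool :=
  inspan (fun p : q.-tuple 'I_4 * q.-tuple 'I_4 => nonid p.2 && (p.1 \in Nset p.2))
         (fun p => Amx (nsig p.1) (nsig p.2)) X.

Definition inVcA (X : 'M[C]_(d * d)) : bool :=
  inspan (fun p : q.-tuple 'I_4 * q.-tuple 'I_4 => nonid p.2 && (p.1 \in Cset p.2))
         (fun p => Amx (nsig p.1) (nsig p.2)) X.

Definition adjgen (t : q.-tuple 'I_4) : 'M[C]_(d * d) :=
  (sqrtC (2%:R * #|Nset t|%:R : C))^-1 *:
    \sum_(s in Nset t) Amx (nsig s) ('i *: ndot (nsig s) (nsig t)).

Definition inVadj (X : 'M[C]_(d * d)) : bool := inspan nonid adjgen X.

Definition hs (A B : 'M[C]_(d * d)) : C := \tr (adj A *m B).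

Definition inVperp (X : 'M[C]_(d * d)) : Prop :=
  inVA X /\ forall Y, inVadj Y -> hs Y X = 0.

(* Pauli group: q-fold tensor products of elements of <X, Z, i 1>,
   i.e. phases i^k times Pauli strings *)
Definition inPauliGroup (P : 'M[C]_d) : Prop :=
  exists (k : 'I_4) (s : q.-tuple 'I_4), P = ('i ^+ k) *: pauli s.

Definition unitary (U : 'M[C]_d) : Prop := U *m adj U = 1%:M.

(* representatives of Clifford group elements (the U(1) quotient is irrelevant
   for the two-copy representation) *)
Definition clifford (U : 'M[C]_d) : Prop :=
  unitary U /\ forall P, inPauliGroup P -> inPauliGroup (U *m P *m adj U).

Definition phi2 (U : 'M[C]_d) (X : 'M[C]_(d * d)) : 'M[C]_(d * d) :=
  (U *t U) *m X *m adj (U *t U).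

End Defs.

(* Main.v *)
Require Import Defs.
From HB Require Import structures.
From mathcomp Require Import all_boot all_order all_algebra.
From mathcomp Require Import complex mxtens.
Set Implicit Arguments. Unset Strict Implicit. Unset Printing Implicit Defensive.
Import GRing.Theory Num.Theory.
Local Open Scope ring_scope.
Local Open Scope complex_scope.
Section A.
Variable R : rcfType.
Local Notation C := R[i].

Lemma adj_tens m n p r (A : 'M[C]_(m,n)) (B : 'M[C]_(p,r)) :
  adj (A *t B) = adj A *t adj B.
Proof. by rewrite /adj map_mxT trmx_tens. Qed.

Lemma adj_mul m n p (A : 'M[C]_(m,n)) (B : 'M[C]_(n,p)) :
  adj (A *m B) = adj B *m adj A.
Proof. by rewrite /adj map_mxM trmx_mul. Qed.

Lemma adjK m n (A : 'M[C]_(m,n)) : adj (adj A) = A.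
Proof. by apply/matrixP => i j; rewrite !mxE conjcK. Qed.

Lemma adjD m n (A B : 'M[C]_(m,n)) : adj (A + B) = adj A + adj B.
Proof. by apply/matrixP => i j; rewrite !mxE rmorphD. Qed.

Lemma adjN m n (A : 'M[C]_(m,n)) : adj (- A) = - adj A.
Proof. by apply/matrixP => i j; rewrite !mxE rmorphN. Qed.

Lemma adjB m n (A B : 'M[C]_(m,n)) : adj (A - B) = adj A - adj B.
Proof. by rewrite adjD adjN. Qed.

Lemma adjZ m n a (A : 'M[C]_(m,n)) : adj (a *: A) = a^* *: adj A.
Proof. by apply/matrixP => i j; rewrite !mxE rmorphM. Qed.

Lemma adj1 n : adj (1%:M : 'M[C]_n) = 1%:M.
Proof.
by apply/matrixP => i j; rewrite !mxE rmorph_nat eq_sym.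
Qed.

Lemma tr_tens m n (A : 'M[C]_m) (B : 'M[C]_n) : \tr (A *t B) = \tr A * \tr B.
Proof. by rewrite /mxtrace mulr_sum; apply: eq_bigr => i _; rewrite mxE. Qed.

Definition swapi n (x : 'I_(n * n)) : 'I_(n * n) :=
  mxtens_index ((mxtens_unindex x).2, (mxtens_unindex x).1).

Lemma swapiK n : involutive (@swapi n).
Proof.
move=> x; rewrite /swapi mxtens_indexK; exact: mxtens_unindexK.
Qed.

Lemma swapiE n (i j : 'I_n) : swapi (mxtens_index (i, j)) = mxtens_index (j, i).
Proof. by rewrite /swapi mxtens_indexK. Qed.

Definition Fs n : 'M[C]_(n * n) := \matrix_(x, y) ((y == swapi x)%:R).

Lemma mulFsE n m (M : 'M[C]_(n * n, m)) x y : (Fs n *m M) x y = M (swapi x) y.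
Proof.
rewrite !mxE (bigD1 (swapi x)) //= mxE eqxx mul1r big1 ?addr0 // => z /negbTE.
by rewrite mxE => ->; rewrite mul0r.
Qed.

Lemma mulmxFsE n m (M : 'M[C]_(m, n * n)) x y : (M *m Fs n) x y = M x (swapi y).
Proof.
rewrite !mxE (bigD1 (swapi y)) //= mxE swapiK eqxx mulr1 big1 ?addr0 // => z hz.
rewrite mxE; case: eqP => [e|]; last by rewrite mulr0.
by move: hz; rewrite e swapiK eqxx.
Qed.

Lemma Fs_tens n (A B : 'M[C]_n) : Fs n *m (A *t B) = (B *t A) *m Fs n.
Proof.
apply/matrixP => x y; rewrite mulFsE mulmxFsE.
case: (mxtens_indexP x) => i j; case: (mxtens_indexP y) => k l.
by rewrite !swapiE !tensmxE mulrC.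
Qed.

Lemma FsFs n : Fs n *m Fs n = 1%:M.
Proof.
apply/matrixP => x y; rewrite mulFsE !mxE swapiK.
by rewrite eq_sym.
Qed.

Lemma adj_Fs n : adj (Fs n) = Fs n.
Proof.
apply/matrixP => x y; rewrite !mxE.
have -> : (x == swapi y) = (y == swapi x).
  by apply/eqP/eqP => ->; rewrite swapiK.
by rewrite rmorph_nat.
Qed.

End A.
Section B.
Variable R : rcfType.
Local Notation C := R[i].

Lemma castmx_irr m n m' n' (e1 e1' : m = m') (e2 e2' : n = n') (A : 'M[C]_(m, n)) :
  castmx (e1, e2) A = castmx (e1', e2') A.
Proof. by rewrite (eq_irrelevance e1 e1') (eq_irrelevance e2 e2'). Qed.

Lemma tens_castr m n p r p' r' (e1 : p = p') (e2 : r = r')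
  (A : 'M[C]_(m, n)) (B : 'M[C]_(p, r)) :
  A *t castmx (e1, e2) B = castmx (congr1 (muln m) e1, congr1 (muln n) e2) (A *t B).
Proof. by case: p' / e1; case: r' / e2; rewrite castmx_id. Qed.

Lemma castmx_mulmx m m' (e : m = m') (A B : 'M[C]_m) :
  castmx (e, e) A *m castmx (e, e) B = castmx (e, e) (A *m B).
Proof. by case: m' / e. Qed.

Lemma castmx_scale m m' (e : m = m') a (A : 'M[C]_m) :
  castmx (e, e) (a *: A) = a *: castmx (e, e) A.
Proof. by case: m' / e. Qed.

Lemma castmx_opp m m' (e : m = m') (A : 'M[C]_m) :
  castmx (e, e) (- A) = - castmx (e, e) A.
Proof. by case: m' / e. Qed.

Lemma castmx_one m m' (e : m = m') : castmx (e, e) (1%:M : 'M[C]_m) = 1%:M.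
Proof. by case: m' / e. Qed.

Lemma adj_castmx m m' n n' (e1 : m = m') (e2 : n = n') (A : 'M[C]_(m, n)) :
  adj (castmx (e1, e2) A) = castmx (e2, e1) (adj A).
Proof. by case: m' / e1; case: n' / e2. Qed.

Lemma tr_castmx m m' (e : m = m') (A : 'M[C]_m) : \tr (castmx (e, e) A) = \tr A.
Proof. by case: m' / e. Qed.

Lemma tens_scale m n p r a b (A : 'M[C]_(m, n)) (B : 'M[C]_(p, r)) :
  (a *: A) *t (b *: B) = (a * b) *: (A *t B).
Proof. by apply/matrixP => x y; rewrite !mxE mulrACA. Qed.

Lemma tens_oppl m n p r (A : 'M[C]_(m, n)) (B : 'M[C]_(p, r)) :
  (- A) *t B = - (A *t B).
Proof. by apply/matrixP => x y; rewrite !mxE mulNr. Qed.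

Lemma tens_oppr m n p r (A : 'M[C]_(m, n)) (B : 'M[C]_(p, r)) :
  A *t (- B) = - (A *t B).
Proof. by apply/matrixP => x y; rewrite !mxE mulrN. Qed.

Lemma tens_scalel m n p r a (A : 'M[C]_(m, n)) (B : 'M[C]_(p, r)) :
  (a *: A) *t B = a *: (A *t B).
Proof. by apply/matrixP => x y; rewrite !mxE mulrA. Qed.

Lemma tens_scaler m n p r a (A : 'M[C]_(m, n)) (B : 'M[C]_(p, r)) :
  A *t (a *: B) = a *: (A *t B).
Proof. by apply/matrixP => x y; rewrite !mxE mulrCA. Qed.

Lemma tens_addl m n p r (A A' : 'M[C]_(m, n)) (B : 'M[C]_(p, r)) :
  (A + A') *t B = A *t B + A' *t B.
Proof. by apply/matrixP => x y; rewrite !mxE mulrDl. Qed.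

Lemma tens_addr m n p r (A : 'M[C]_(m, n)) (B B' : 'M[C]_(p, r)) :
  A *t (B + B') = A *t B + A *t B'.
Proof. by apply/matrixP => x y; rewrite !mxE mulrDr. Qed.

Lemma mxtens_index_inj m n : injective (@mxtens_index m n).
Proof. exact: can_inj (@mxtens_indexK m n). Qed.

Lemma eq_mxtens_index m n (i k : 'I_m) (j l : 'I_n) :
  (mxtens_index (i, j) == mxtens_index (k, l)) = (i == k) && (j == l).
Proof. by rewrite (inj_eq (@mxtens_index_inj m n)) xpair_eqE. Qed.

Lemma tens11 m n : (1%:M : 'M[C]_m) *t (1%:M : 'M[C]_n) = 1%:M.
Proof.
apply/matrixP => x y; case: (mxtens_indexP x) => i j; case: (mxtens_indexP y) => k l.
by rewrite tensmxE !mxE eq_mxtens_index -natrM mulnb.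
Qed.

Lemma one_neq0 n : (1%:M : 'M[C]_(2 ^ n)) != 0.
Proof.
apply/eqP => /matrixP /(_ (Ordinal (expn_gt0 2 n)) (Ordinal (expn_gt0 2 n))).
by rewrite !mxE eqxx /= => /eqP; rewrite oner_eq0.
Qed.

End B.
Section B2.
Variable R : rcfType.
Local Notation C := R[i].

Definition xor4 (a b : 'I_4) : 'I_4 := @Ordinal 4 (Nat.lxor a b %% 4) (ltn_pmod (Nat.lxor a b) (isT : (0 < 4)%N)).

Definition ph1 (a b : 'I_4) : C :=
  match nat_of_ord a, nat_of_ord b with
  | 1, 2 => 'i | 2, 1 => - 'i
  | 2, 3 => 'i | 3, 2 => - 'i
  | 3, 1 => 'i | 1, 3 => - 'i
  | _, _ => 1
  end.

Lemma ii : ('i%R : C) * 'i%R = -1.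
Proof. by rewrite -expr2 sqrCi. Qed.

Lemma xor4_eq0 a b : (xor4 a b == ord0) = (a == b).
Proof.
by case: a => [[|[|[|[|//]]]] ?]; case: b => [[|[|[|[|//]]]] ?].
Qed.

Lemma xor4_cancel m a b : (xor4 m a == xor4 m b) = (a == b).
Proof.
by case: m => [[|[|[|[|//]]]] ?]; case: a => [[|[|[|[|//]]]] ?];
   case: b => [[|[|[|[|//]]]] ?].
Qed.

Lemma pauli1_mul a b : pauli1 R a *m pauli1 R b = ph1 a b *: pauli1 R (xor4 a b).
Proof.
apply/matrixP => x y; rewrite !mxE !big_ord_recl big_ord0 !mxE.
case: a => [[|[|[|[|//]]]] ?]; case: b => [[|[|[|[|//]]]] ?];
case: x => [[|[|//]] ?]; case: y => [[|[|//]] ?] /=;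
rewrite ?complexiE ?ii ?mulrN ?mulNr ?opprK ?mul1r ?mulr1 ?mul0r ?mulr0 ?addr0 ?add0r ?ii ?oppr0 ?opprK ?subr0 ?addr0 //.
Qed.

End B2.
Section B3.
Variable R : rcfType.
Local Notation C := R[i].
Local Notation p1 := (pauli1 R).

Ltac csimp := rewrite ?complexiE ?mulrN ?mulNr ?ii ?opprK ?mul1r ?mulr1 ?mul0r ?mulr0 ?addr0 ?add0r ?oppr0 ?subr0 ?ii ?opprK ?addr0 ?oppr0 ?subrr.

Lemma pauli1_0 : p1 ord0 = 1%:M.
Proof. by apply/matrixP => x y; rewrite !mxE /=; case: eqP. Qed.

Lemma pauli1_herm a : adj (p1 a) = p1 a.
Proof.
apply/matrixP => x y; rewrite !mxE.
case: a => [[|[|[|[|//]]]] ?]; case: x => [[|[|//]] ?]; case: y => [[|[|//]] ?] /=;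
by apply/eqP; rewrite eq_complex /= ?oppr0 ?opprK ?eqxx.
Qed.

Lemma pauli1_sq a : p1 a *m p1 a = 1%:M.
Proof.
apply/matrixP => x y; rewrite !mxE !big_ord_recl !big_ord0 !mxE.
case: a => [[|[|[|[|//]]]] ?]; case: x => [[|[|//]] ?]; case: y => [[|[|//]] ?] /=;
csimp => //.
Qed.

Lemma pauli1_comm a b : p1 b *m p1 a = p1 a *m p1 b \/ p1 b *m p1 a = - (p1 a *m p1 b).
Proof.
case: a => [[|[|[|[|//]]]] ?]; case: b => [[|[|[|[|//]]]] ?];
[left|left|left|left|left|left|right|right|left|right|left|right|left|right|right|left];
apply/matrixP => x y; rewrite !mxE !big_ord_recl !big_ord0 !mxE;
case: x => [[|[|//]] ?]; case: y => [[|[|//]] ?] /=; csimp => //; rewrite ?oppr0 //.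
Qed.

Lemma pauli1_tr a : a != ord0 -> \tr (p1 a) = 0.
Proof.
rewrite /mxtrace !big_ord_recl !big_ord0 !mxE.
by case: a => [[|[|[|[|//]]]] ?] //= _; csimp.
Qed.

Lemma pauli1_compl (i k j l : 'I_2) :
  \sum_(a < 4) p1 a i k * p1 a j l = 2%:R * ((i == l) && (j == k))%:R.
Proof.
rewrite !big_ord_recl !big_ord0 !mxE.
case: i => [[|[|//]] ?]; case: k => [[|[|//]] ?];
case: j => [[|[|//]] ?]; case: l => [[|[|//]] ?] /=; csimp => //.
Qed.

End B3.
Section B4.
Variable R : rcfType.
Local Notation C := R[i].
Local Notation p1 := (pauli1 R).
Local Notation P := (pauli R).

Definition txor n (s t : n.-tuple 'I_4) : n.-tuple 'I_4 :=
  [tuple of map (fun p => xor4 p.1 p.2) (zip s t)].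

Definition ztup n : n.-tuple 'I_4 := [tuple of nseq n ord0].

Lemma txor_cons n a b (s t : n.-tuple 'I_4) :
  txor [tuple of a :: s] [tuple of b :: t] = [tuple of xor4 a b :: txor s t].
Proof. exact: val_inj. Qed.

Lemma tuple_cons_eq n a b (s t : n.-tuple 'I_4) :
  ([tuple of a :: s] == [tuple of b :: t]) = (a == b) && (s == t).
Proof. by rewrite -val_eqE /= eqseq_cons. Qed.

Lemma nonid_cons n a (s : n.-tuple 'I_4) :
  nonid [tuple of a :: s] = (a != ord0) || nonid s.
Proof. by rewrite /nonid /= negb_and. Qed.

Lemma nonid_false n (s : n.-tuple 'I_4) : ~~ nonid s -> s = ztup n.
Proof.
rewrite /nonid negbK => /all_pred1P h; apply: val_inj; by rewrite /= h size_tuple.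
Qed.

Lemma nonid_txor n (s t : n.-tuple 'I_4) : nonid (txor s t) = (s != t).
Proof.
elim: n s t => [|n IH] s t.
  by rewrite (tuple0 s) (tuple0 t).
case/tupleP: s => a s; case/tupleP: t => b t.
by rewrite txor_cons nonid_cons IH tuple_cons_eq negb_and xor4_eq0.
Qed.

Lemma txor_cancel n (m s t : n.-tuple 'I_4) : (txor m s == txor m t) = (s == t).
Proof.
elim: n m s t => [|n IH] m s t.
  by rewrite (tuple0 s) (tuple0 t) !eqxx.
case/tupleP: m => c m; case/tupleP: s => a s; case/tupleP: t => b t.
by rewrite !txor_cons !tuple_cons_eq IH xor4_cancel.
Qed.

Lemma pauli_cons n a (s : n.-tuple 'I_4) :
  P [tuple of a :: s] = castmx (esym (expnS 2 n), esym (expnS 2 n)) (p1 a *t P s).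
Proof.
rewrite /pauli /= tens_castr !castmx_comp; exact: castmx_irr.
Qed.

Lemma pauli_nil (s : 0.-tuple 'I_4) : P s = 1%:M.
Proof. by rewrite (tuple0 s) /pauli /= castmx_one. Qed.

Lemma pauli_z n : P (ztup n) = 1%:M.
Proof.
elim: n => [|n IH]; first exact: pauli_nil.
have -> : ztup n.+1 = [tuple of ord0 :: ztup n] by apply: val_inj.
by rewrite pauli_cons pauli1_0 IH tens11 castmx_one.
Qed.

Lemma pauli_herm n (s : n.-tuple 'I_4) : adj (P s) = P s.
Proof.
elim: n s => [|n IH] s; first by rewrite pauli_nil adj1.
case/tupleP: s => a s.
by rewrite pauli_cons adj_castmx adj_tens pauli1_herm IH.
Qed.

Lemma pauli_sq n (s : n.-tuple 'I_4) : P s *m P s = 1%:M.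
Proof.
elim: n s => [|n IH] s; first by rewrite pauli_nil mul1mx.
case/tupleP: s => a s.
by rewrite pauli_cons castmx_mulmx tensmx_mul pauli1_sq IH tens11 castmx_one.
Qed.

Lemma pauli_mul n (s t : n.-tuple 'I_4) : exists c, P s *m P t = c *: P (txor s t).
Proof.
elim: n s t => [|n IH] s t.
  by exists 1; rewrite !pauli_nil mul1mx scale1r.
case/tupleP: s => a s; case/tupleP: t => b t.
have [c hc] := IH s t.
exists (ph1 R a b * c).
rewrite txor_cons !pauli_cons castmx_mulmx tensmx_mul pauli1_mul hc tens_scale.
by rewrite castmx_scale.
Qed.

Lemma pauli_comm n (s t : n.-tuple 'I_4) :
  P t *m P s = P s *m P t \/ P t *m P s = - (P s *m P t).
Proof.
elim: n s t => [|n IH] s t.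
  by left; rewrite !pauli_nil.
case/tupleP: s => a s; case/tupleP: t => b t.
rewrite !pauli_cons !castmx_mulmx !tensmx_mul.
case: (pauli1_comm R a b) => ->; case: (IH s t) => ->.
- by left.
- by right; rewrite tens_oppr castmx_opp.
- by right; rewrite tens_oppl castmx_opp.
- by left; rewrite tens_oppl tens_oppr opprK.
Qed.

Lemma pauli_tr n (s : n.-tuple 'I_4) : nonid s -> \tr (P s) = 0.
Proof.
elim: n s => [|n IH] s.
  by rewrite (tuple0 s).
case/tupleP: s => a s.
rewrite nonid_cons pauli_cons tr_castmx tr_tens.
case: (a =P ord0) => [_|/eqP ha] /=.
  by move=> /IH ->; rewrite mulr0.
by move=> _; rewrite pauli1_tr // mul0r.
Qed.

Lemma big_tuple_cons (T : finType) n (F : n.+1.-tuple T -> C) :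
  \sum_(t : n.+1.-tuple T) F t = \sum_(a : T) \sum_(s : n.-tuple T) F [tuple of a :: s].
Proof.
rewrite pair_big /=.
rewrite (reindex (fun p : T * n.-tuple T => [tuple of p.1 :: p.2])) //=.
exists (fun t : n.+1.-tuple T => (thead t, [tuple of behead t])).
  move=> [a s] _ /=; congr (_, _); exact: val_inj.
move=> t _; case/tupleP: t => a s /=; exact: val_inj.
Qed.

Lemma pauli_compl n (i k j l : 'I_(2 ^ n)) :
  \sum_(s : n.-tuple 'I_4) P s i k * P s j l = (2 ^ n)%:R * ((i == l) && (j == k))%:R.
Proof.
elim: n i k j l => [|n IH] i k j l.
  have e : forall x y : 'I_(2 ^ 0), x = y.
    by move=> [x hx] [y hy]; apply: val_inj => /=; move: hx hy; rewrite expn0;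
       case: x => //; case: y.
  rewrite (eq_bigr (fun _ => 1%:M i k * 1%:M j l)) => [|t _]; last by rewrite pauli_nil.
  have -> : (2 ^ 0)%:R = 1 :> C by rewrite expn0.
  rewrite sumr_const card_tuple card_ord (e k i) (e l i) (e j i) !mxE eqxx /=.
  by rewrite mulr1 expn0.
rewrite (big_tuple_cons (fun s => P s i k * P s j l)).
rewrite (eq_bigr (fun a => \sum_(s : n.-tuple 'I_4)
    (p1 a *t P s) (cast_ord (esym (esym (expnS 2 n))) i) (cast_ord (esym (esym (expnS 2 n))) k) *
    (p1 a *t P s) (cast_ord (esym (esym (expnS 2 n))) j) (cast_ord (esym (esym (expnS 2 n))) l)));
  last by move=> a _; apply: eq_bigr => s _; rewrite pauli_cons !castmxE.
have -> : (i == l) = (cast_ord (esym (esym (expnS 2 n))) i == cast_ord (esym (esym (expnS 2 n))) l).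
  by rewrite (inj_eq (@cast_ord_inj _ _ _)).
have -> : (j == k) = (cast_ord (esym (esym (expnS 2 n))) j == cast_ord (esym (esym (expnS 2 n))) k).
  by rewrite (inj_eq (@cast_ord_inj _ _ _)).
case: (mxtens_indexP (cast_ord _ i)) => i1 i2.
case: (mxtens_indexP (cast_ord _ k)) => k1 k2.
case: (mxtens_indexP (cast_ord _ j)) => j1 j2.
case: (mxtens_indexP (cast_ord _ l)) => l1 l2.
rewrite (eq_bigr (fun a => (p1 a i1 k1 * p1 a j1 l1) *
   \sum_(s : n.-tuple 'I_4) P s i2 k2 * P s j2 l2)); last first.
  move=> a _; rewrite mulr_sumr; apply: eq_bigr => s _.
  by rewrite !tensmxE mulrACA.
rewrite -mulr_suml pauli1_compl IH !eq_mxtens_index expnS natrM.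
rewrite mulrACA -natrM.
congr (_ * _); rewrite -natrM mulnb.
by case: (i1 == l1); case: (i2 == l2); case: (j1 == k1); case: (j2 == k2).
Qed.

End B4.
Section C0.
Variable R : rcfType.
Local Notation C := R[i].
Variable q : nat.
Local Notation d := (2 ^ q)%N.
Local Notation P := (@pauli R q).
Local Notation dC := ((2 ^ q)%:R : C).
Local Notation F := (Fs R (2 ^ q)).

Lemma dC_neq0 : dC != 0.
Proof. by rewrite pnatr_eq0 expn_eq0. Qed.

Lemma Fs_expand : F = dC^-1 *: \sum_(s : q.-tuple 'I_4) (P s *t P s).
Proof.
apply/matrixP => x y; case: (mxtens_indexP x) => i j; case: (mxtens_indexP y) => k l.
rewrite !mxE summxE.
rewrite (eq_bigr (fun s : q.-tuple 'I_4 => P s i k * P s j l)); last first.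
  by move=> s _; rewrite tensmxE.
rewrite pauli_compl mulrA mulVf ?dC_neq0 // mul1r swapiE eq_mxtens_index.
by rewrite (eq_sym k) (eq_sym l) andbC.
Qed.

Lemma sum_tens_l (A B : 'M[C]_d) :
  \sum_(s : q.-tuple 'I_4) (P s *m A) *t (P s *m B) = dC *: (F *m (A *t B)).
Proof.
rewrite Fs_expand -scalemxAl scalerA mulfV ?dC_neq0 // scale1r mulmx_suml.
by apply: eq_bigr => s _; rewrite tensmx_mul.
Qed.

Lemma sum_tens_r (A B : 'M[C]_d) :
  \sum_(s : q.-tuple 'I_4) (A *m P s) *t (B *m P s) = dC *: ((A *t B) *m F).
Proof.
rewrite Fs_expand -scalemxAr scalerA mulfV ?dC_neq0 // scale1r mulmx_sumr.
by apply: eq_bigr => s _; rewrite tensmx_mul.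
Qed.

Definition fm (X : 'M[C]_(d * d)) := F *m X - X *m F.

Lemma fm_lin a X Y : fm (a *: X + Y) = a *: fm X + fm Y.
Proof.
rewrite /fm mulmxDr mulmxDl -scalemxAr -scalemxAl scalerBr.
by rewrite addrACA opprD.
Qed.

Lemma fm0 : fm 0 = 0.
Proof. by rewrite /fm mulmx0 mul0mx subrr. Qed.

Lemma fm_sum (I : finType) (Pr : pred I) (c : I -> C) (Z : I -> 'M[C]_(d * d)) :
  fm (\sum_(i | Pr i) c i *: Z i) = \sum_(i | Pr i) c i *: fm (Z i).
Proof.
rewrite /fm mulmx_sumr mulmx_suml -sumrB; apply: eq_bigr => i _.
by rewrite -scalemxAr -scalemxAl scalerBr.
Qed.

Lemma fm_fm X : F *m X *m F = - X -> fm (fm X) = 4%:R *: X.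
Proof.
move=> hX.
have e1 : F *m (F *m X - X *m F) = X - F *m X *m F.
  by rewrite mulmxBr mulmxA FsFs mul1mx mulmxA.
have e2 : (F *m X - X *m F) *m F = F *m X *m F - X.
  by rewrite mulmxBl -(mulmxA X) FsFs mulmx1.
rewrite /fm e1 e2 hX opprK opprB opprK scaler_nat !mulrS mulr0n addr0.
by rewrite !addrA.
Qed.

Lemma fm_phi2 U X : fm (phi2 U X) = phi2 U (fm X).
Proof.
rewrite /fm /phi2 adj_tens.
have h1 : F *m (U *t U) = (U *t U) *m F by rewrite Fs_tens.
have h2 : F *m (adj U *t adj U) = (adj U *t adj U) *m F by rewrite Fs_tens.
rewrite mulmxBr mulmxBl !mulmxA h1 -!mulmxA h2.
by rewrite !mulmxA.
Qed.

End C0.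
Section C1.
Variable R : rcfType.
Local Notation C := R[i].
Variable q : nat.
Local Notation d := (2 ^ q)%N.
Local Notation P := (@pauli R q).
Local Notation dC := ((2 ^ q)%:R : C).
Local Notation F := (Fs R (2 ^ q)).
Local Notation rr := (sqrtC dC).
Local Notation kk := (sqrtC (2%:R : C)).

Lemma rr_neq0 : rr != 0.
Proof. by rewrite sqrtC_eq0 dC_neq0. Qed.

Lemma kk_neq0 : kk != 0.
Proof. by rewrite sqrtC_eq0 pnatr_eq0. Qed.

Lemma two_neq0 : (2%:R : C) != 0.
Proof. by rewrite pnatr_eq0. Qed.

Lemma mxvecZ m n a (A : 'M[C]_(m, n)) : mxvec (a *: A) = a *: mxvec A.
Proof. by apply/rowP => k; case/mxvec_indexP: k => i j; rewrite mxvecE !mxE mxvecE. Qed.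

Lemma mxvec_sum m n (J : finType) (Q : pred J) (Z : J -> 'M[C]_(m, n)) :
  mxvec (\sum_(j | Q j) Z j) = \sum_(j | Q j) mxvec (Z j).
Proof.
apply/rowP => k; case/mxvec_indexP: k => i j; rewrite mxvecE !summxE.
by apply: eq_bigr => x _; rewrite mxvecE.
Qed.

Lemma mxvecD m n (A B : 'M[C]_(m, n)) : mxvec (A + B) = mxvec A + mxvec B.
Proof. by apply/rowP => k; case/mxvec_indexP: k => i j; rewrite mxvecE !mxE !mxvecE. Qed.

Lemma mxvec0 m n : mxvec (0 : 'M[C]_(m, n)) = 0.
Proof. by apply/rowP => k; case/mxvec_indexP: k => i j; rewrite mxvecE !mxE. Qed.

Section Span.
Variables (I : finType) (Pr : pred I) (g : I -> 'M[C]_(d * d)).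

Lemma inspanP X :
  reflect (exists c : I -> C, X = \sum_(i | Pr i) c i *: g i) (inspan Pr g X).
Proof.
rewrite /inspan; apply: (iffP (sub_sums_genmxP _ _ _)) => [[u hu]|[c ->]].
  exists (fun i => u i 0 0); apply: (can_inj (@mxvecK _ _ _)).
  rewrite hu mxvec_sum; apply: eq_bigr => i _.
  by rewrite mxvecZ -mul_scalar_mx -mx11_scalar.
exists (fun i => (c i)%:M); rewrite mxvec_sum; apply: eq_bigr => i _.
by rewrite mxvecZ mul_scalar_mx.
Qed.

Lemma inspan_gen i : Pr i -> inspan Pr g (g i).
Proof. by move=> Pi; rewrite /inspan (sumsmx_sup i) // genmxE. Qed.

Lemma inspan0 : inspan Pr g 0.
Proof. by rewrite /inspan mxvec0 sub0mx. Qed.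

Lemma inspanZ a X : inspan Pr g X -> inspan Pr g (a *: X).
Proof. by rewrite /inspan mxvecZ; apply: scalemx_sub. Qed.

Lemma inspanD X Y : inspan Pr g X -> inspan Pr g Y -> inspan Pr g (X + Y).
Proof. by rewrite /inspan mxvecD; apply: addmx_sub. Qed.

Lemma inspan_sum (J : finType) (Q : pred J) (Z : J -> 'M[C]_(d * d)) :
  (forall j, Q j -> inspan Pr g (Z j)) -> inspan Pr g (\sum_(j | Q j) Z j).
Proof.
by move=> h; rewrite /inspan mxvec_sum; apply: summx_sub => j Qj; apply: h.
Qed.

End Span.

End C1.
Section C1b.
Variable R : rcfType.
Local Notation C := R[i].
Variable q : nat.
Local Notation d := (2 ^ q)%N.
Local Notation P := (@pauli R q).
Local Notation dC := ((2 ^ q)%:R : C).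
Local Notation F := (Fs R (2 ^ q)).
Local Notation rr := (sqrtC dC).
Local Notation kk := (sqrtC (2%:R : C)).
Definition G (a b : q.-tuple 'I_4) : 'M[C]_(d * d) := P a *t P b - P b *t P a.

Definition kap : C := kk^-1 * (rr^-1 * rr^-1).

Lemma kap_neq0 : kap != 0.
Proof. by rewrite !mulf_neq0 ?invr_eq0 ?kk_neq0 ?rr_neq0. Qed.

Lemma Amx_nsig a b : Amx (nsig R a) (nsig R b) = kap *: G a b.
Proof.
by rewrite /Amx /nsig !tens_scale -scalerBr scalerA.
Qed.

Lemma G_span (Pr : pred (q.-tuple 'I_4 * q.-tuple 'I_4)) a b :
  Pr (a, b) -> inspan Pr (fun p => Amx (nsig R p.1) (nsig R p.2)) (G a b).
Proof.
move=> h; have -> : G a b = kap^-1 *: Amx (nsig R a) (nsig R b).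
  by rewrite Amx_nsig scalerA mulVf ?kap_neq0 // scale1r.
by apply: inspanZ; exact: (@inspan_gen R q _ Pr _ (a, b) h).
Qed.

Lemma span_G (Pr : pred (q.-tuple 'I_4 * q.-tuple 'I_4)) X :
  inspan Pr (fun p => Amx (nsig R p.1) (nsig R p.2)) X ->
  exists c : _ -> C, X = \sum_(p | Pr p) c p *: G p.1 p.2.
Proof.
case/inspanP => c ->; exists (fun p => c p * kap).
by apply: eq_bigr => p _; rewrite Amx_nsig scalerA.
Qed.

Lemma G_asym a b : F *m G a b *m F = - G a b.
Proof.
rewrite /G mulmxBr mulmxBl !Fs_tens -!mulmxA FsFs !mulmx1.
by rewrite opprB.
Qed.

Lemma span_asym (Pr : pred (q.-tuple 'I_4 * q.-tuple 'I_4)) X :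
  inspan Pr (fun p => Amx (nsig R p.1) (nsig R p.2)) X -> F *m X *m F = - X.
Proof.
case/span_G => c ->; rewrite mulmx_sumr mulmx_suml -sumrN.
by apply: eq_bigr => p _; rewrite -scalemxAr -scalemxAl G_asym scalerN.
Qed.

Lemma nsig_mul a b : nsig R a *m nsig R b = (rr^-1 * rr^-1) *: (P a *m P b).
Proof. by rewrite /nsig -scalemxAl -scalemxAr scalerA. Qed.

Lemma Nset_mem a b : (a \in Nset R b) = nonid a && (P a *m P b + P b *m P a == 0).
Proof.
rewrite inE !nsig_mul -scalerDr scaler_eq0 mulf_eq0 invr_eq0 (negbTE (rr_neq0 R q)).
by [].
Qed.

Lemma Cset_mem a b :
  (a \in Cset R b) = [&& nonid a, a != b & P a *m P b == P b *m P a].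
Proof.
rewrite inE !nsig_mul (inj_eq (scalerI _)) //.
by rewrite mulf_neq0 // invr_eq0 (rr_neq0 R q).
Qed.

Lemma PP_unit a b : (P a *m P b) *m (P b *m P a) = 1%:M.
Proof. by rewrite mulmxA -(mulmxA (P a)) pauli_sq mulmx1 pauli_sq. Qed.

Lemma PP_neq0 a b : P a *m P b != 0.
Proof.
apply/eqP => h; have := PP_unit a b; rewrite h mul0mx => /esym /eqP.
by rewrite (negbTE (one_neq0 R q)).
Qed.

Lemma scale_cancel (M : 'M[C]_d) e e' : M != 0 -> e *: M = e' *: M -> e = e'.
Proof.
move=> hM /eqP; rewrite -subr_eq0 -scalerBl scaler_eq0 (negbTE hM) orbF subr_eq0.
by move/eqP.
Qed.

Lemma sgnP a b : exists2 e : C, (e = 1) \/ (e = -1) & P a *m P b = e *: (P b *m P a).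
Proof.
case: (pauli_comm R b a) => h.
  by exists 1; [left | rewrite scale1r].
by exists (-1); [right | rewrite scaleN1r].
Qed.

Lemma comm_anti a b :
  (P a *m P b + P b *m P a == 0) = ~~ (P a *m P b == P b *m P a).
Proof.
case: (pauli_comm R b a) => ->.
  rewrite eqxx /=.
  have -> : P b *m P a + P b *m P a = 2%:R *: (P b *m P a).
    by rewrite scaler_nat mulr2n.
  by rewrite scaler_eq0 (negbTE (two_neq0 R)) (negbTE (PP_neq0 b a)).
rewrite addNr eqxx; symmetry; apply/negP => /eqP h.
have : (P b *m P a) *+ 2 == 0 by rewrite mulr2n -{1}h addNr.
by rewrite -scaler_nat scaler_eq0 (negbTE (two_neq0 R)) (negbTE (PP_neq0 b a)).
Qed.

Lemma PzE : P (ztup q) = 1%:M.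
Proof. exact: pauli_z. Qed.

End C1b.
Section C2.
Variable R : rcfType.
Local Notation C := R[i].
Variable q : nat.
Local Notation d := (2 ^ q)%N.
Local Notation P := (@pauli R q).
Local Notation dC := ((2 ^ q)%:R : C).
Local Notation F := (Fs R (2 ^ q)).
Local Notation GG := (G R).
Local Notation tup := (q.-tuple 'I_4).

Definition Hm (a b m : tup) : 'M[C]_(d * d) :=
  (P m *m P a) *t (P m *m P b) - (P m *m P b) *t (P m *m P a).

Definition Tm (a b m : tup) : 'M[C]_(d * d) :=
  Hm a b m - ((P a *m P m) *t (P b *m P m) - (P b *m P m) *t (P a *m P m)).

Lemma fm_G a b : dC *: fm (GG a b) = \sum_(m : tup) Tm a b m.
Proof.
rewrite /fm /G mulmxBr mulmxBl !scalerBr.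
rewrite -!sum_tens_l -!sum_tens_r /Tm /Hm !sumrB.
by [].
Qed.

Lemma Tm_sgn a b m ea eb :
  P a *m P m = ea *: (P m *m P a) -> P b *m P m = eb *: (P m *m P b) ->
  Tm a b m = (1 - ea * eb) *: Hm a b m.
Proof.
move=> ha hb; rewrite /Tm ha hb !tens_scale (mulrC eb ea) -scalerBr /Hm.
by rewrite scalerBl scale1r.
Qed.

Lemma Tm_cases a b m :
  Tm a b m = 0 \/
  exists2 ea : C, (ea = 1 \/ ea = -1) &
    [/\ Tm a b m = 2%:R *: Hm a b m, P a *m P m = ea *: (P m *m P a)
      & P b *m P m = (- ea) *: (P m *m P b)].
Proof.
have [ea hea1 hea] := sgnP R a m; have [eb heb1 heb] := sgnP R b m.
rewrite (Tm_sgn hea heb).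
case: hea1 => e1; case: heb1 => e2; subst ea eb.
- by left; rewrite mulr1 subrr scale0r.
- right; exists 1; first by left.
  by split => //; rewrite mulrN1 opprK.
- right; exists (-1); first by right.
  by split => //; rewrite ?opprK // mulN1r opprK.
- by left; rewrite mulrNN mulr1 subrr scale0r.
Qed.

Lemma PPPP a b m ea :
  P a *m P m = ea *: (P m *m P a) ->
  (P m *m P a) *m (P m *m P b) = ea *: (P a *m P b).
Proof.
move=> h.
rewrite mulmxA -(mulmxA (P m) (P a) (P m)) h -scalemxAr -scalemxAl.
by rewrite mulmxA pauli_sq mul1mx.
Qed.

Lemma Hm_G a b m : exists c : C, [/\ c != 0,
  Hm a b m = c *: GG (txor m a) (txor m b) &
  (P m *m P a) *m (P m *m P b) = c *: (P (txor m a) *m P (txor m b)) /\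
  (P m *m P b) *m (P m *m P a) = c *: (P (txor m b) *m P (txor m a))].
Proof.
have [c1 h1] := pauli_mul R m a; have [c2 h2] := pauli_mul R m b.
have nz1 : c1 != 0.
  by apply/eqP => e; move: (PP_neq0 R m a); rewrite h1 e scale0r eqxx.
have nz2 : c2 != 0.
  by apply/eqP => e; move: (PP_neq0 R m b); rewrite h2 e scale0r eqxx.
exists (c1 * c2); split; first by rewrite mulf_neq0.
  by rewrite /Hm h1 h2 !tens_scale (mulrC c2 c1) -scalerBr.
split; rewrite h1 h2 -scalemxAl -scalemxAr scalerA //.
by rewrite mulrC.
Qed.

Lemma scalerI' (c : C) (X Y : 'M[C]_d) : c != 0 -> c *: X = c *: Y -> X = Y.
Proof. by move=> hc; apply: scalerI. Qed.

Lemma f_G_comm a b : nonid a -> nonid b -> a != b ->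
  P a *m P b = P b *m P a -> inVA (fm (GG a b)).
Proof.
move=> na nb nab hab.
have -> : fm (GG a b) = dC^-1 *: (dC *: fm (GG a b)).
  by rewrite scalerA mulVf ?dC_neq0 // scale1r.
rewrite fm_G; apply: inspanZ; apply: inspan_sum => m _.
case: (Tm_cases a b m) => [->|[ea hea1 [-> hea heb]]]; first exact: inspan0.
apply: inspanZ.
have [c [cnz -> [e1 e2]]] := Hm_G a b m.
apply: inspanZ; apply: G_span => /=.
have ma : m != a.
  apply/eqP => ema; subst m.
  have e1' : ea = 1.
    apply: (@scale_cancel R q (P a *m P a)); first exact: PP_neq0.
    by rewrite -hea scale1r.
  move: heb; rewrite e1' hab => h.
  have : (1 : C) = - 1.
    by apply: (@scale_cancel R q (P b *m P a)); [exact: PP_neq0 | rewrite scale1r].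
  move/eqP; rewrite -subr_eq0 opprK -(natrD _ 1 1) pnatr_eq0 //.
have mb : m != b.
  apply/eqP => emb; subst m.
  have e1' : - ea = 1.
    apply: (@scale_cancel R q (P b *m P b)); first exact: PP_neq0.
    by rewrite -heb scale1r.
  move: hea; rewrite -hab.
  have -> : ea = -1 by rewrite -e1' opprK.
  move=> h.
  have : (1 : C) = - 1.
    by apply: (@scale_cancel R q (P a *m P b)); [exact: PP_neq0 | rewrite scale1r].
  move/eqP; rewrite -subr_eq0 opprK -(natrD _ 1 1) pnatr_eq0 //.
rewrite nonid_txor mb /= Nset_mem nonid_txor ma /=.
apply/eqP; apply: (@scalerI' c) => //.
rewrite scaler0 scalerDr -e1 -e2 (PPPP b hea) (PPPP a heb) hab.
by rewrite scaleNr addrN.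
Qed.

End C2.
Section C3.
Variable R : rcfType.
Local Notation C := R[i].
Variable q : nat.
Local Notation d := (2 ^ q)%N.
Local Notation P := (@pauli R q).
Local Notation dC := ((2 ^ q)%:R : C).
Local Notation F := (Fs R (2 ^ q)).
Local Notation GG := (G R).
Local Notation tup := (q.-tuple 'I_4).

Definition Em (M : 'M[C]_d) : 'M[C]_(d * d) := 1%:M *t M - M *t 1%:M.

Lemma zaux (V : zmodType) (A B : V) : A - B - (- A - - B) = (A - B) *+ 2.
Proof. by rewrite opprB opprK [- B + A]addrC mulr2n. Qed.

Lemma zaux2 (V : zmodType) (A B : V) : - B - - A - (B - A) = (A - B) *+ 2.
Proof. by rewrite opprK opprB [- B + A]addrC mulr2n. Qed.

Lemma Tm_a a b : P b *m P a = - (P a *m P b) -> Tm R a b a = 2%:R *: Em (P a *m P b).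
Proof.
move=> h; rewrite /Tm /Hm pauli_sq h tens_oppl tens_oppr.
by rewrite zaux scaler_nat.
Qed.

Lemma Tm_b a b : P b *m P a = - (P a *m P b) -> Tm R a b b = 2%:R *: Em (P a *m P b).
Proof.
move=> h; rewrite /Tm /Hm pauli_sq h tens_oppl tens_oppr.
by rewrite zaux2 scaler_nat.
Qed.

Lemma f_G_anti a b : nonid a -> nonid b -> P a *m P b + P b *m P a == 0 ->
  inVcA (fm (GG a b) - (4%:R / dC) *: Em (P a *m P b)).
Proof.
move=> na nb hab.
have hba : P b *m P a = - (P a *m P b) by apply/eqP; rewrite -addr_eq0 addrC.
have ab : a != b.
  apply/eqP => e; subst b; move: hab.
  rewrite -mulr2n -scaler_nat scaler_eq0 (negbTE (two_neq0 R)) /=.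
  by rewrite (negbTE (PP_neq0 R a a)).
have -> : fm (GG a b) - (4%:R / dC) *: Em (P a *m P b) =
    dC^-1 *: (dC *: fm (GG a b) - 4%:R *: Em (P a *m P b)).
  by rewrite [RHS]scalerBr !scalerA mulVf ?dC_neq0 // scale1r mulrC.
rewrite fm_G (bigD1 a) //= (bigD1 b) /=; last by rewrite eq_sym.
rewrite (Tm_a hba) (Tm_b hba) addrA -scalerDl -(natrD _ 2 2) addrC addrK.
apply: inspanZ; apply: inspan_sum => m /andP [ma mb].
case: (Tm_cases R a b m) => [->|[ea hea1 [-> hea heb]]]; first exact: inspan0.
apply: inspanZ.
have [c [cnz -> [e1 e2]]] := Hm_G R a b m.
apply: inspanZ; apply: G_span => /=.
rewrite nonid_txor mb /= Cset_mem nonid_txor ma txor_cancel ab /=.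
apply/eqP; apply: (@scalerI' R q c) => //.
rewrite -e1 -e2 (PPPP b hea) (PPPP a heb) hba.
by rewrite scalerN scaleNr opprK.
Qed.

End C3.
Section C4.
Variable R : rcfType.
Local Notation C := R[i].
Variable q : nat.
Local Notation d := (2 ^ q)%N.
Local Notation P := (@pauli R q).
Local Notation dC := ((2 ^ q)%:R : C).
Local Notation F := (Fs R (2 ^ q)).
Local Notation GG := (G R).
Local Notation tup := (q.-tuple 'I_4).
Local Notation rr := (sqrtC dC).
Local Notation kk := (sqrtC (2%:R : C)).
Local Notation E := (@Em R q).

Lemma mxtraceB' n (A B : 'M[C]_n) : \tr (A - B) = \tr A - \tr B.
Proof.
rewrite mxtraceD; congr (_ + _); rewrite /mxtrace -sumrN.
by apply: eq_bigr => i _; rewrite mxE.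
Qed.

Lemma mxtrace_sum' n (I : finType) (Pr : pred I) (A : I -> 'M[C]_n) :
  \tr (\sum_(i | Pr i) A i) = \sum_(i | Pr i) \tr (A i).
Proof.
rewrite /mxtrace (eq_bigr (fun j => \sum_(i | Pr i) A i j j)) => [|j _].
  by rewrite exchange_big.
exact: summxE.
Qed.

Lemma Em_herm t : adj (E (P t)) = E (P t).
Proof. by rewrite /Em adjB !adj_tens adj1 pauli_herm. Qed.

Lemma Em_asym M : F *m E M *m F = - E M.
Proof.
rewrite /Em mulmxBr mulmxBl !Fs_tens -!mulmxA FsFs !mulmx1.
by rewrite opprB.
Qed.

Lemma tr_EG t a b : nonid a -> nonid b -> \tr (E (P t) *m GG a b) = 0.
Proof.
move=> na nb.
rewrite /Em /G !mulmxBl !mulmxBr !tensmx_mul !mxtraceB' !tr_tens ?mul1mx ?mulmx1.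
by rewrite !pauli_tr // !mul0r !mulr0 !subrr.
Qed.

Lemma tr_EE t M : nonid t -> \tr (E (P t) *m E M) = 2%:R * dC * \tr (P t *m M).
Proof.
move=> nt.
rewrite /Em !mulmxBl !mulmxBr !tensmx_mul !mxtraceB' !tr_tens ?mul1mx ?mulmx1.
rewrite pauli_tr // !mul0r !mulr0 ?subr0 mxtrace1.
rewrite sub0r opprK (mulrC (\tr _)) -mulrA mulr_natl mulr2n.
by rewrite mulrDl !mul1r.
Qed.

Lemma span_trE (Pr : pred (tup * tup)) X t :
  (forall p, Pr p -> nonid p.1 && nonid p.2) ->
  inspan Pr (fun p => Amx (nsig R p.1) (nsig R p.2)) X ->
  \tr (E (P t) *m X) = 0.
Proof.
move=> hP /span_G [c ->]; rewrite mulmx_sumr mxtrace_sum' big1 // => p Pp.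
have /andP [n1 n2] := hP p Pp.
by rewrite -scalemxAr mxtraceZ tr_EG // mulr0.
Qed.

End C4.
Section C5.
Variable R : rcfType.
Local Notation C := R[i].
Variable q : nat.
Local Notation d := (2 ^ q)%N.
Local Notation P := (@pauli R q).
Local Notation dC := ((2 ^ q)%:R : C).
Local Notation F := (Fs R (2 ^ q)).
Local Notation GG := (G R).
Local Notation tup := (q.-tuple 'I_4).
Local Notation rr := (sqrtC dC).
Local Notation kk := (sqrtC (2%:R : C)).
Local Notation E := (@Em R q).

Lemma PtPsPt t s :
  P t *m P s *m P t = if s \in Nset R t then - P s else P s.
Proof.
case: ifP => hs.
  move: hs; rewrite Nset_mem => /andP [_ h].
  have -> : P t *m P s = - (P s *m P t) by apply/eqP; rewrite -addr_eq0 addrC.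
  by rewrite mulNmx -mulmxA pauli_sq mulmx1.
move: hs; rewrite Nset_mem; case nts: (nonid s) => /=.
  rewrite comm_anti => /negbFE /eqP h.
  by rewrite -h -mulmxA pauli_sq mulmx1.
move=> _; rewrite (nonid_false (negbT nts)) pauli_z mulmx1.
by rewrite pauli_sq.
Qed.

Lemma sumN_h t :
  \sum_(s in Nset R t) P s *t (P s *m P t) = (dC / 2%:R) *: (F *m E (P t)).
Proof.
have S1 : \sum_(s : tup) P s *t (P s *m P t) = dC *: (F *m (1%:M *t P t)).
  by rewrite -sum_tens_l; apply: eq_bigr => s _; rewrite mulmx1.
have S2 : \sum_(s : tup) (P t *m P s *m P t) *t (P s *m P t) = dC *: (F *m (P t *t 1%:M)).
  transitivity ((P t *t 1%:M) *m \sum_(s : tup) (P s *m P t) *t (P s *m P t)).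
    rewrite mulmx_sumr; apply: eq_bigr => s _.
    by rewrite tensmx_mul mul1mx mulmxA.
  rewrite sum_tens_l -scalemxAr mulmxA -Fs_tens -mulmxA tensmx_mul mul1mx pauli_sq.
  by [].
rewrite (bigID (fun s => s \in Nset R t)) /= in S1.
rewrite (bigID (fun s => s \in Nset R t)) /= in S2.
rewrite (eq_bigr (fun s => - (P s *t (P s *m P t)))) in S2; last first.
  by move=> s hs; rewrite PtPsPt hs tens_oppl.
rewrite (eq_bigr (fun s => P s *t (P s *m P t)) (P := fun s => s \notin Nset R t)) in S2; last first.
  by move=> s hs; rewrite PtPsPt (negbTE hs).
rewrite sumrN in S2.
have : (\sum_(s in Nset R t) P s *t (P s *m P t)) *+ 2 =
   dC *: (F *m (1%:M *t P t)) - dC *: (F *m (P t *t 1%:M)).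
  rewrite -S1 -S2 opprD opprK addrACA subrr addr0 mulr2n.
  by [].
rewrite -scalerBr -mulmxBr -/(E (P t)) => h.
apply: (@scalerI _ _ (2%:R : C)); first exact: two_neq0.
rewrite scaler_nat h scalerA mulrC -mulrA mulVf ?two_neq0 // mulr1.
by [].
Qed.

Definition Hs (t s : tup) : 'M[C]_(d * d) :=
  P s *t (P s *m P t) - (P s *m P t) *t P s.

Lemma sumN_H t : \sum_(s in Nset R t) Hs t s = (dC / 2%:R) *: fm (E (P t)).
Proof.
rewrite /Hs sumrB sumN_h /fm scalerBr; congr (_ - _).
transitivity (F *m (\sum_(s in Nset R t) P s *t (P s *m P t)) *m F).
  rewrite mulmx_sumr mulmx_suml; apply: eq_bigr => s _.
  by rewrite Fs_tens -mulmxA FsFs mulmx1.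
by rewrite sumN_h -scalemxAr -scalemxAl mulmxA FsFs mul1mx.
Qed.

End C5.
Section C6.
Variable R : rcfType.
Local Notation C := R[i].
Variable q : nat.
Local Notation d := (2 ^ q)%N.
Local Notation P := (@pauli R q).
Local Notation dC := ((2 ^ q)%:R : C).
Local Notation F := (Fs R (2 ^ q)).
Local Notation GG := (G R).
Local Notation tup := (q.-tuple 'I_4).
Local Notation rr := (sqrtC dC).
Local Notation kk := (sqrtC (2%:R : C)).
Local Notation E := (@Em R q).

Lemma Amx_ndot s t (z : C) :
  Amx (nsig R s) (z *: ndot (nsig R s) (nsig R t)) =
  (kk^-1 * (rr^-1 * (z * rr * (rr^-1 * rr^-1)))) *: @Hs R q t s.
Proof.
rewrite /ndot nsig_mul !scalerA /Amx {1 2}/nsig !tens_scale.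
rewrite [X in (X *: (P s *m P t *t P s))]mulrC -scalerBr scalerA.
by [].
Qed.

Lemma Em_neq0 t : nonid t -> E (P t) != 0.
Proof.
move=> nt; apply/eqP => h.
have := congr1 (fun X => \tr ((1%:M *t P t) *m X)) h.
rewrite /= mulmx0 mxtrace0 /Em mulmxBr !tensmx_mul mxtraceB' !tr_tens.
rewrite !mul1mx mulmx1 pauli_sq pauli_tr // mulr0 subr0 mxtrace1 => /eqP.
by rewrite mulf_eq0 orbb (negbTE (dC_neq0 R q)).
Qed.

Lemma i_neq0 : ('i%C : C) != 0.
Proof. by apply/eqP; case; move/eqP; rewrite oner_eq0. Qed.

Lemma adjgen_E t : exists2 k : C, (nonid t -> k != 0) & adjgen R t = k *: fm (E (P t)).
Proof.
rewrite /adjgen.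
under eq_bigr do rewrite Amx_ndot.
rewrite -scaler_sumr sumN_H !scalerA.
eexists; last reflexivity.
move=> nt.
have nN : #|Nset R t| != 0%N.
  apply/negP; rewrite cards_eq0 => /eqP h0.
  have := sumN_H R t; rewrite h0 big_set0 => /esym /eqP.
  rewrite scaler_eq0 mulf_eq0 invr_eq0 (negbTE (dC_neq0 R q)) (negbTE (two_neq0 R)) /=.
  move=> /eqP hf.
  have := fm_fm (Em_asym (P t)); rewrite hf fm0 => /esym /eqP.
  by rewrite scaler_eq0 pnatr_eq0 /= (negbTE (Em_neq0 nt)).
rewrite !mulf_neq0 // ?invr_eq0 ?sqrtC_eq0 ?mulf_eq0 ?pnatr_eq0 ?negb_or ?nN //.
all: try exact: rr_neq0.
all: try exact: kk_neq0.
all: try exact: dC_neq0.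
all: try exact: two_neq0.
all: try exact: i_neq0.
all: by rewrite expn_eq0.
Qed.

Lemma hs_E t k Y : hs (k *: fm (E (P t))) Y = k^* * \tr (E (P t) *m fm Y).
Proof.
rewrite /hs adjZ -scalemxAl mxtraceZ; congr (_ * _).
rewrite /fm adjB !adj_mul adj_Fs Em_herm.
rewrite (mulmxBl (E (P t) *m F) (F *m E (P t)) Y).
rewrite (mulmxBr (E (P t)) (F *m Y) (Y *m F)) !mxtraceB' -!mulmxA; congr (_ - _).
by rewrite mxtrace_mulC mulmxA.
Qed.

Lemma trPP a b : a != b -> \tr (P a *m P b) = 0.
Proof.
move=> ab; have [c ->] := pauli_mul R a b.
by rewrite mxtraceZ pauli_tr ?mulr0 // nonid_txor.
Qed.

Lemma pauli_coord (M : 'M[C]_d) : dC *: M = \sum_(t : tup) \tr (P t *m M) *: P t.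
Proof.
apply/matrixP => j l; rewrite mxE summxE.
rewrite (eq_bigr (fun t => \sum_i \sum_k P t i k * M k i * P t j l)); last first.
  move=> t _; rewrite mxE /mxtrace mulr_suml; apply: eq_bigr => i _.
  by rewrite mxE mulr_suml.
rewrite exchange_big /=.
rewrite (eq_bigr (fun i => \sum_k M k i * (dC * ((i == l) && (j == k))%:R))); last first.
  move=> i _; rewrite exchange_big /=; apply: eq_bigr => k _.
  rewrite -pauli_compl mulr_sumr; apply: eq_bigr => t _.
  by rewrite mulrCA mulrA.
rewrite (bigD1 l) //= [X in _ + X]big1 ?addr0; last first.
  move=> i /negbTE hi; apply: big1 => k _; by rewrite hi /= mulr0 mulr0.
rewrite (bigD1 j) //= [X in _ + X]big1 ?addr0; last first.
  by move=> k /negbTE hk; rewrite eq_sym hk andbF mulr0 mulr0.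
by rewrite !eqxx /= mulr1 mulrC.
Qed.

End C6.
Section C7.
Variable R : rcfType.
Local Notation C := R[i].
Variable q : nat.
Local Notation d := (2 ^ q)%N.
Local Notation P := (@pauli R q).
Local Notation dC := ((2 ^ q)%:R : C).
Local Notation F := (Fs R (2 ^ q)).
Local Notation GG := (G R).
Local Notation tup := (q.-tuple 'I_4).
Local Notation E := (@Em R q).

Lemma fmZ a (X : 'M[C]_(d * d)) : fm (a *: X) = a *: fm X.
Proof. by have := fm_lin a X 0; rewrite !addr0 fm0 addr0. Qed.

Lemma adj0' m n : adj (0 : 'M[C]_(m, n)) = 0.
Proof. by apply/matrixP => i j; rewrite !mxE conjc0. Qed.

Lemma adj_sum m n (I : finType) (Pr : pred I) (A : I -> 'M[C]_(m, n)) :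
  adj (\sum_(i | Pr i) A i) = \sum_(i | Pr i) adj (A i).
Proof. exact: (big_morph _ (@adjD _ _ _) (@adj0' _ _)). Qed.

Lemma hs_sum (I : finType) (Pr : pred I) (c : I -> C) (A : I -> 'M[C]_(d * d)) Z :
  hs (\sum_(i | Pr i) c i *: A i) Z = \sum_(i | Pr i) (c i)^* * hs (A i) Z.
Proof.
rewrite /hs adj_sum mulmx_suml mxtrace_sum'; apply: eq_bigr => i _.
by rewrite adjZ -scalemxAl mxtraceZ.
Qed.

Lemma Em0 : E 0 = 0.
Proof. by rewrite /Em tensmx0 tens0mx subrr. Qed.

Lemma EmD M N : E (M + N) = E M + E N.
Proof. by rewrite /Em tens_addr tens_addl opprD addrACA. Qed.

Lemma EmZ a M : E (a *: M) = a *: E M.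
Proof. by rewrite /Em tens_scaler tens_scalel scalerBr. Qed.

Lemma Em_sum (I : finType) (Pr : pred I) (c : I -> C) (A : I -> 'M[C]_d) :
  E (\sum_(i | Pr i) c i *: A i) = \sum_(i | Pr i) c i *: E (A i).
Proof.
rewrite (big_morph _ EmD Em0); apply: eq_bigr => i _; exact: EmZ.
Qed.

Lemma VA_nonid (p : tup * tup) :
  nonid p.2 && (p.1 \in Nset R p.2) -> nonid p.1 && nonid p.2.
Proof. by case/andP => n2; rewrite Nset_mem => /andP [n1 _]; rewrite n1 n2. Qed.

Lemma VcA_nonid (p : tup * tup) :
  nonid p.2 && (p.1 \in Cset R p.2) -> nonid p.1 && nonid p.2.
Proof. by case/andP => n2; rewrite Cset_mem => /and3P [n1 _ _]; rewrite n1 n2. Qed.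

Lemma anti_neq a b : P a *m P b + P b *m P a == 0 -> a != b.
Proof.
move=> hab; apply/eqP => e; subst b; move: hab.
rewrite -mulr2n -scaler_nat scaler_eq0 (negbTE (two_neq0 R)) /=.
by rewrite (negbTE (PP_neq0 R a a)).
Qed.

Lemma four_neq0 : (4%:R : C) != 0.
Proof. by rewrite pnatr_eq0. Qed.

Lemma VcA_to_perp (X : 'M[C]_(d * d)) : inVcA X -> inVperp (fm X).
Proof.
move=> hX; have asX := span_asym hX.
split.
  case/span_G: hX => c ->; rewrite fm_sum.
  apply: inspan_sum => p /andP [n2]; rewrite Cset_mem => /and3P [n1 ne /eqP hc].
  by apply: inspanZ; apply: f_G_comm.
move=> Y /inspanP [c ->]; rewrite hs_sum big1 // => t nt.
have [k _ ->] := adjgen_E R t.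
rewrite hs_E (fm_fm asX) -scalemxAr mxtraceZ.
by rewrite (@span_trE R q _ _ t VcA_nonid hX) !mulr0.
Qed.

Lemma VcA_inj (X : 'M[C]_(d * d)) : inVcA X -> fm X = 0 -> X = 0.
Proof.
move=> hX h0; have := fm_fm (span_asym hX); rewrite h0 fm0 => /esym /eqP.
by rewrite scaler_eq0 (negbTE four_neq0) /= => /eqP.
Qed.

Lemma perp_to_VcA (Y : 'M[C]_(d * d)) : inVperp Y -> exists2 X, inVcA X & fm X = Y.
Proof.
case=> hA horth; have asY := span_asym hA.
case/span_G: (hA) => c hYe.
pose Pr := fun p : tup * tup => nonid p.2 && (p.1 \in Nset R p.2).
pose W := fun p : tup * tup =>
  fm (GG p.1 p.2) - (4%:R / dC) *: E (P p.1 *m P p.2).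
pose M := \sum_(p | Pr p) c p *: (P p.1 *m P p.2).
have hW : forall p, Pr p -> inVcA (W p).
  move=> p /andP [n2]; rewrite Nset_mem => /andP [n1 an].
  exact: f_G_anti.
have hWs : inVcA (\sum_(p | Pr p) c p *: W p).
  by apply: inspan_sum => p pp; apply: inspanZ; apply: hW.
have hfY : fm Y = \sum_(p | Pr p) c p *: W p + (4%:R / dC) *: E M.
  rewrite hYe fm_sum /M Em_sum scaler_sumr -big_split /=.
  apply: eq_bigr => p _; rewrite /W.
  have -> : forall (k c' : C) (Z : 'M[C]_(d * d)), k *: (c' *: Z) = c' *: (k *: Z).
    by move=> k c' Z; rewrite !scalerA mulrC.
  by rewrite -scalerDr subrK.
have hM : M = 0.
  apply: (scalerI (dC_neq0 R q)); rewrite scaler0 pauli_coord big1 // => t _.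
  suff -> : \tr (P t *m M) = 0 by rewrite scale0r.
  case nt: (nonid t).
    have [k knz hk] := adjgen_E R t.
    have := horth (adjgen R t) (inspan_gen (adjgen R (q:=q)) nt).
    rewrite hk hs_E hfY mulmxDr mxtraceD -scalemxAr mxtraceZ.
    rewrite (@span_trE R q _ _ t VcA_nonid hWs) add0r tr_EE // => /eqP.
    rewrite !mulf_eq0 conjc_eq0 (negbTE (knz nt)) (negbTE four_neq0) invr_eq0.
    by rewrite (negbTE (dC_neq0 R q)) (negbTE (two_neq0 R)) /= => /eqP.
  rewrite (nonid_false (negbT nt)) pauli_z mul1mx /M mxtrace_sum' big1 // => p.
  move=> /andP [_]; rewrite Nset_mem => /andP [_ an].
  by rewrite mxtraceZ trPP ?mulr0 // anti_neq.
exists (4%:R^-1 *: fm Y).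
  apply: inspanZ; rewrite hfY hM Em0 scaler0 addr0; exact: hWs.
by rewrite fmZ (fm_fm asY) scalerA mulVf ?four_neq0 // scale1r.
Qed.

End C7.

Local Close Scope complex_scope.

Theorem lemma6 (R : rcfType) (q : nat) (hq : (1 <= q)%N) :
  exists f : 'M[R[i]]_(2 ^ q * 2 ^ q) -> 'M[R[i]]_(2 ^ q * 2 ^ q),
    (forall (a : R[i]) X Y, f (a *: X + Y) = a *: f X + f Y) /\
    (forall X, inVcA X -> inVperp (f X)) /\
    (forall X, inVcA X -> f X = 0 -> X = 0) /\
    (forall Y, inVperp Y -> exists2 X, inVcA X & f X = Y) /\
    (forall U, clifford U -> forall X, inVcA X -> f (phi2 U X) = phi2 U (f X)).
Proof.
exists (@fm R q); split; first by move=> a X Y; exact: fm_lin.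
split; first by move=> X; exact: VcA_to_perp.
split; first by move=> X; exact: VcA_inj.
split; first by move=> Y; exact: perp_to_VcA.
by move=> U _ X _; exact: fm_phi2.
Qed.
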